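(* Let $G=(m,n,\boldsymbol{c},\boldsymbol{d},r_{\max},r_{\min})$ be an interbank lending game with strategy space $\boldsymbol{S}$, and let $$\Phi(\boldsymbol{s})=\sum_{j\in B}\sum_{i\in L}\bigl(r_j(\boldsymbol{s},i)-r_{\min}\bigr)s_{ij},\qquad r_j(\boldsymbol{s},z)=(r_{\min}-r_{\max})\frac{\sum_{i=1}^{z}s_{ij}}{d_j}+r_{\max}.$$ Then $\Phi$ is strictly concave over $\boldsymbol{S}$.
   Context: An interbank lending game $G=(m,n,\boldsymbol{c},\boldsymbol{d},r_{\max},r_{\min})$ consists of positive integers $m,n$, budgets $\boldsymbol{c}\in\mathbb{R}_{>0}^m$, demands $\boldsymbol{d}\in\mathbb{R}_{>0}^n$ and reals $0<r_{\min}<r_{\max}$. Lenders are $L=\{1,\dots,m\}$, borrowers $B=\{1,\dots,n\}$. Lender $i$'s strategy set is $S_i=\{s_i\in\mathbb{R}_{\ge0}^n:\sum_{j\in B}s_{ij}\le c_i\}$ and the strategy space is $\boldsymbol{S}=\prod_{i\in L}S_i$, whose elements are $\boldsymbol{s}=(s_{ij})_{i\in L,j\in B}$. *)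

(* Defs.v *)
(* Lenders 1..m are 'I_m, borrowers 1..n are 'I_n;
   a strategy profile s = (s_ij) is an m x n matrix over the reals. *)
From HB Require Import structures.
From mathcomp Require Import all_boot all_order all_algebra.
Set Implicit Arguments. Unset Strict Implicit. Unset Printing Implicit Defensive.
Import Order.TTheory GRing.Theory Num.Theory.
Local Open Scope ring_scope.

Definition strategy_space (R : realFieldType) (m n : nat) (c : 'I_m -> R)
  (s : 'M[R]_(m, n)) : Prop :=
  (forall (i : 'I_m) (j : 'I_n), 0 <= s i j) /\
  (forall i : 'I_m, \sum_(j < n) s i j <= c i).

Definition rate (R : realFieldType) (m n : nat) (d : 'I_n -> R) (rmax rmin : R)
  (s : 'M[R]_(m, n)) (j : 'I_n) (z : 'I_m) : R :=
  (rmin - rmax) * ((\sum_(i < m | (i <= z)%N) s i j) / d j) + rmax.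

Definition Phi (R : realFieldType) (m n : nat) (d : 'I_n -> R) (rmax rmin : R)
  (s : 'M[R]_(m, n)) : R :=
  \sum_(j < n) \sum_(i < m) (rate d rmax rmin s j i - rmin) * s i j.

Definition strictly_concave_on (R : realFieldType) (m n : nat)
  (A : 'M[R]_(m, n) -> Prop) (f : 'M[R]_(m, n) -> R) : Prop :=
  forall (s t : 'M[R]_(m, n)) (l : R), A s -> A t -> s <> t -> 0 < l -> l < 1 ->
    l * f s + (1 - l) * f t < f (l *: s + (1 - l) *: t).

(* Main.v *)
Require Import Defs.
From mathcomp Require Import all_boot all_order all_algebra.
From mathcomp Require Import ring lra.
Set Implicit Arguments. Unset Strict Implicit. Unset Printing Implicit Defensive.
Import Order.TTheory GRing.Theory Num.Theory.
Local Open Scope ring_scope.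

Section S.
Variable (R : realFieldType) (m : nat).

Definition Bf (u w : 'I_m -> R) : R :=
  \sum_(i < m) \sum_(k < m) ((k <= i)%N)%:R * (u k * w i).

Lemma Bf_sym2 (v : 'I_m -> R) :
  Bf v v *+ 2 = (\sum_(i < m) v i) ^+ 2 + \sum_(i < m) v i ^+ 2.
Proof.
rewrite mulr2n {2}/Bf exchange_big /= /Bf -big_split /=.
rewrite expr2 mulr_suml -big_split /=; apply: eq_bigr => i _.
rewrite -big_split /= mulr_sumr.
rewrite (bigD1 i) //= [X in _ = X + _](bigD1 i) //= leqnn.
rewrite -addrA [in RHS]addrAC -addrA; congr (_ + _).
  by rewrite mul1r.
rewrite mul1r expr2; congr (_ + _).
apply: eq_bigr => k hk.
have : (k <= i)%N || (i <= k)%N by apply: leq_total.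
rewrite [v i * v k]mulrC.
have hne : (k <= i)%N -> (i <= k)%N -> False.
  move=> h1 h2; move/negP: hk; apply; apply/eqP/val_inj/eqP; by rewrite eqn_leq h1 h2.
case/orP=> h.
  have h2 : (i <= k)%N = false by apply/negP => h2; exact: hne h h2.
  by rewrite h h2 mul1r mul0r addr0.
have h2 : (k <= i)%N = false by apply/negP => h2; exact: hne h2 h.
by rewrite h h2 mul1r mul0r add0r.
Qed.

Lemma Bf_ge0 v : 0 <= Bf v v.
Proof.
have : 0 <= Bf v v *+ 2 by rewrite Bf_sym2 addr_ge0 ?sqr_ge0 ?sumr_ge0 // => i _; rewrite sqr_ge0.
by rewrite pmulrn_lge0.
Qed.

Lemma Bf_gt0 v i0 : v i0 != 0 -> 0 < Bf v v.
Proof.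
move=> h.
have : 0 < Bf v v *+ 2.
  rewrite Bf_sym2 [X in _ + X](bigD1 i0) //=.
  have h1 : 0 < v i0 ^+ 2 by rewrite exprn_even_gt0.
  have h2 : 0 <= \sum_(i < m | i != i0) v i ^+ 2 by apply: sumr_ge0 => *; rewrite sqr_ge0.
  have h3 := sqr_ge0 (\sum_(i < m) v i).
  lra.
by rewrite pmulrn_lgt0.
Qed.

Lemma Bf_conv (x y : 'I_m -> R) (l : R) :
  Bf (fun i => l * x i + (1 - l) * y i) (fun i => l * x i + (1 - l) * y i)
  = l * Bf x x + (1 - l) * Bf y y - l * (1 - l) * Bf (fun i => x i - y i) (fun i => x i - y i).
Proof.
rewrite /Bf !mulr_sumr -big_split -sumrB /=; apply: eq_bigr => i _.
rewrite !mulr_sumr -big_split -sumrB /=; apply: eq_bigr => k _.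
ring.
Qed.

Lemma Bf_ext (u u' : 'I_m -> R) : (forall i, u i = u' i) -> Bf u u = Bf u' u'.
Proof. by move=> h; apply: eq_bigr => i _; apply: eq_bigr => k _; rewrite !h. Qed.
End S.

Lemma Phi_eq (R : realFieldType) (m n : nat) (d : 'I_n -> R) (rmax rmin : R)
  (hd : forall j, 0 < d j) (s : 'M[R]_(m, n)) :
  Phi d rmax rmin s = \sum_(j < n) ((rmax - rmin) * \sum_(i < m) s i j
     - (rmax - rmin) / d j * Bf (fun i => s i j) (fun i => s i j)).
Proof.
apply: eq_bigr => j _.
rewrite /Bf mulr_sumr mulr_sumr -sumrB. apply eq_bigr => i _.
have -> : \sum_(k < m) ((k <= i)%N)%:R * (s k j * s i j)
   = (\sum_(k < m | (k <= i)%N) s k j) * s i j.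
  rewrite mulr_suml [in RHS]big_mkcond; apply: eq_bigr => k _.
  by case: ifP => _; rewrite ?mul1r ?mul0r.
rewrite /rate; ring.
Qed.

Theorem lemma3p2 (R : realFieldType) (m n : nat) (c : 'I_m -> R) (d : 'I_n -> R)
  (rmax rmin : R) (hm : (0 < m)%N) (hn : (0 < n)%N)
  (hc : forall i, 0 < c i) (hd : forall j, 0 < d j)
  (hrmin : 0 < rmin) (hr : rmin < rmax) :
  strictly_concave_on (strategy_space c) (Phi d rmax rmin).
Proof.
move=> s t l _ _ hst hl0 hl1.
set z := l *: s + (1 - l) *: t.
have key : Phi d rmax rmin z - (l * Phi d rmax rmin s + (1 - l) * Phi d rmax rmin t)
  = \sum_(j < n) l * (1 - l) * ((rmax - rmin) / d j) *
      Bf (fun i => s i j - t i j) (fun i => s i j - t i j).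
  rewrite !Phi_eq // !mulr_sumr -big_split -sumrB /=; apply: eq_bigr => j _.
  rewrite (@Bf_ext _ _ (fun i => z i j) (fun i => l * s i j + (1 - l) * t i j));
    last by move=> i; rewrite !mxE.
  rewrite Bf_conv.
  have -> : \sum_(i < m) z i j = l * \sum_(i < m) s i j + (1 - l) * \sum_(i < m) t i j.
    by rewrite !mulr_sumr -big_split; apply: eq_bigr => i _; rewrite !mxE.
  ring.
have [/existsP [i0 /existsP [j0 hij]] | hno] := boolP [exists i, exists j, s i j != t i j].
  rewrite -subr_gt0 key (bigD1 j0) //=.
  have ha : forall j, 0 < l * (1 - l) * ((rmax - rmin) / d j).
    move=> j; rewrite !mulr_gt0 ?invr_gt0 ?subr_gt0 //.
  set A := (X in 0 < X + _).
  set S := (X in 0 < _ + X).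
  have hA : 0 < A.
    apply: mulr_gt0; [exact: ha|].
    by apply: (@Bf_gt0 _ _ _ i0); rewrite subr_eq0.
  have hS : 0 <= S.
    apply: sumr_ge0 => j _; apply: mulr_ge0; first exact: ltW.
    exact: Bf_ge0.
  lra.
exfalso; apply: hst; apply/matrixP => i j.
apply/eqP; apply/negPn; apply/negP => h; move/negP: hno; apply.
by apply/existsP; exists i; apply/existsP; exists j.
Qed.
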